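(* Let $\mathcal A$ and $\mathcal B$ be collections, and set $\mathcal B_\Gamma=\{B\in\mathcal B:\text{every infinite }B'\subseteq B\text{ belongs to }\mathcal B\}$. If $\mathcal A$ is a filter base, then $\mathrm{I}\uparrow G_1(\mathcal A,\neg\mathcal B)$ if and only if $\mathrm{I}\uparrow G_1(\mathcal A,\neg\mathcal B_\Gamma)$.
   Context: $\mathcal A$ is a filter base if its members are nonempty sets and for all $A_1,A_2\in\mathcal A$ there is $A_3\in\mathcal A$ with $A_3\subseteq A_1\cap A_2$. For collections $\mathcal E,\mathcal C$, in the game $G_1(\mathcal E,\mathcal C)$, at each inning $n\in\omega$ player One plays $E_n\in\mathcal E$ and Two picks $x_n\in E_n$; Two wins iff $\{x_n:n\in\omega\}\in\mathcal C$, otherwise One wins. $\neg\mathcal C$ is the complement of $\mathcal C$ (so Two wins $G_1(\mathcal E,\neg\mathcal C)$ iff $\{x_n:n\in\omega\}\notin\mathcal C$). A strategy for One maps each finite sequence of Two's previous moves to a move in $\mathcal E$; it is winning if One wins every play following it. $\mathrm{I}\uparrow G$ means One has a winning strategy in $G$. *)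

(* Defs.v *)
From mathcomp Require Import all_boot.
From mathcomp Require Import boolp classical_sets cardinality.
Set Implicit Arguments. Unset Strict Implicit. Unset Printing Implicit Defensive.
Local Open Scope classical_set_scope.

Definition filter_base (X : Type) (A : set (set X)) : Prop :=
  (forall S, A S -> S !=set0) /\
  (forall A1 A2, A A1 -> A A2 -> exists2 A3, A A3 & A3 `<=` A1 `&` A2).

Definition prev_moves (X : Type) (x : nat -> X) (n : nat) : seq X :=
  map x (iota 0 n).

(* A strategy for One maps finite sequences of Two's previous moves to a move. *)
Definition strategy (X : Type) := seq X -> set X.

Definition follows (X : Type) (sigma : strategy X) (x : nat -> X) : Prop :=
  forall n, sigma (prev_moves x n) (x n).

(* sigma is a winning strategy for One in G_1(E, C):
   every move lies in E, and for every play following sigma,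
   Two does not win, i.e. {x_n : n} is not in C. *)
Definition one_winning (X : Type) (E C : set (set X)) (sigma : strategy X) : Prop :=
  (forall s, E (sigma s)) /\
  (forall x, follows sigma x -> ~ C (range x)).

Definition I_has_winning (X : Type) (E C : set (set X)) : Prop :=
  exists sigma : strategy X, one_winning E C sigma.

Definition negC (X : Type) (C : set (set X)) : set (set X) := ~` C.

Definition Gamma (X : Type) (B : set (set X)) : set (set X) :=
  [set S | B S /\ forall S', S' `<=` S -> infinite_set S' -> B S'].

(* Main.v *)
Require Import Defs.
From mathcomp Require Import all_boot.
From mathcomp Require Import boolp classical_sets cardinality.
From mathcomp Require Import zify.
Set Implicit Arguments. Unset Strict Implicit. Unset Printing Implicit Defensive.
Local Open Scope classical_set_scope.

Section Aux.
Variable X : Type.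

Inductive subr : seq X -> seq X -> Prop :=
| subr_nil : subr [::] [::]
| subr_skip t s a : subr t s -> subr t (rcons s a)
| subr_take t s a : subr t s -> subr (rcons t a) (rcons s a).

Lemma subr_inv t s : subr t s ->
  (t = [::] /\ s = [::]) \/ (exists s' a, s = rcons s' a /\ subr t s') \/
  (exists t' s' a, t = rcons t' a /\ s = rcons s' a /\ subr t' s').
Proof. case; eauto 10. Qed.

Lemma rcons_nil' (s : seq X) a : rcons s a <> [::].
Proof. by case: s. Qed.

Lemma fin_cover (A : set (set X)) : filter_base A ->
  forall s (f : seq X -> set X), (forall t, A (f t)) ->
  exists2 T, A T & forall t, subr t s -> T `<=` f t.
Proof.
move=> [_ fb] s; elim/last_ind: s => [|s a IH] f hf.
  exists (f [::]) => // t /subr_inv [[-> _]//|[[s' [a' [H _]]]|[t' [s' [a' [_ [H _]]]]]]];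
  by case: (@rcons_nil' s' a').
have [T1 A1 H1] := IH f hf.
have [T2 A2 H2] := IH (fun t => f (rcons t a)) (fun t => hf _).
have [T3 A3 H3] := fb _ _ A1 A2.
exists T3 => // t /subr_inv [[_ H]|[[s' [a' [H Hs]]]|[t' [s' [a' [-> [H Hs]]]]]]].
- by case: (@rcons_nil' s a).
- case: (rcons_inj H) => ? ?; subst; move=> z /H3 [z1 _]; exact: H1.
- case: (rcons_inj H) => ? ?; subst; move=> z /H3 [_ z2]; exact: H2.
Qed.

Lemma prevS (x : nat -> X) n : prev_moves x n.+1 = rcons (prev_moves x n) (x n).
Proof. by rewrite /prev_moves -addn1 iotaD map_cat /= cats1. Qed.

Lemma sub_prev (x : nat -> X) (g : nat -> nat) :
  (forall a b, a < b -> g a < g b) ->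
  forall m k, (forall i, i < k -> g i < m) ->
  subr (prev_moves (x \o g) k) (prev_moves x m).
Proof.
move=> gi; elim=> [|m IH] k hk.
  case: k hk => [|k] hk; first exact: subr_nil.
  by have := hk 0 isT.
rewrite prevS; case: k hk => [|k] hk.
  by apply: subr_skip; apply: (IH 0).
have hk' := hk k (ltnSn k).
case: (eqVneq (g k) m) => e.
  rewrite prevS /= e; apply: subr_take; apply: IH => i ik.
  by rewrite -e; apply: gi.
apply: subr_skip; apply: IH => i ik.
have : g i <= g k.
  case: (ltngtP i k) => [/gi /ltnW //| |->//]; lia.
lia.
Qed.

Lemma least (Q : nat -> Prop) n : Q n -> exists m, Q m /\ forall j, Q j -> m <= j.
Proof.
move=> Qn; have ex : exists n, `[< Q n >] by exists n; apply/asboolP.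
case: (ex_minnP ex) => m /asboolP Qm mn; exists m; split => // j Qj.
by apply: mn; apply/asboolP.
Qed.

Fixpoint genum (nxt : nat -> nat) (k : nat) : nat :=
  match k with 0 => nxt 0 | k'.+1 => nxt (genum nxt k').+1 end.

Lemma enum_inf (x : nat -> X) (S : set X) : S `<=` range x -> infinite_set S ->
  exists g : nat -> nat, (forall a b, a < b -> g a < g b) /\ range (x \o g) = S.
Proof.
move=> Sx Sinf.
pose P n := S (x n) /\ forall m, m < n -> x m <> x n.
have first_occ : forall s, S s -> exists n, P n /\ x n = s.
  move=> s Ss; have [n0 _ e0] := Sx s Ss.
  have [n [en mn]] := @least (fun n => x n = s) n0 e0.
  exists n; split => //; split; first by rewrite en.
  move=> m lt ex; have := mn m; rewrite ex en => /(_ erefl); lia.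
have unb : forall N, exists n, N <= n /\ P n.
  move=> N; apply: contrapT => nex; apply: Sinf.
  apply: (@sub_finite_set _ _ (x @` `I_N)); last exact/finite_image/finite_II.
  move=> s /first_occ [n [Pn <-]]; exists n => //=.
  rewrite /= ltnNge; apply/negP => Nn; apply: nex; by exists n.
have : forall n, exists m, (n <= m /\ P m) /\ forall j, (n <= j /\ P j) -> m <= j.
  move=> n; have [m0 hm0] := unb n; exact: (@least (fun j => n <= j /\ P j) m0 hm0).
case/choice => nxt hnxt.
pose g := genum nxt.
have gS : forall k, g k < g k.+1 by move=> k; case: (hnxt (g k).+1) => [[]].
have gi : forall a b, a < b -> g a < g b.
  move=> a; elim=> [//|b IH]; rewrite ltnS leq_eqVlt => /orP [/eqP ->//|ab].
  exact: ltn_trans (IH ab) (gS b).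
have Pg : forall k, P (g k).
  case=> [|k]; first by case: (hnxt 0) => [[]].
  by case: (hnxt (g k).+1) => [[]].
have gk : forall k, k <= g k.
  elim=> [//|k IH]; have := gS k; lia.
have compl : forall k n, P n -> n <= g k -> exists k', g k' = n.
  elim=> [|k IH] n Pn ng.
    exists 0; case: (hnxt 0) => _ /(_ n (conj (leq0n n) Pn)); rewrite /g /= in ng *; lia.
  case: (leqP n (g k)) => [|gkn]; first exact: IH.
  exists k.+1; case: (hnxt (g k).+1) => _ /(_ n (conj gkn Pn)).
  rewrite /g /= in ng *; lia.
exists g; split => //; apply/seteqP; split.
  by move=> s [k _ <-]; case: (Pg k).
move=> s /first_occ [n [Pn <-]].
have [k' e] := compl n n Pn (gk n); by exists k'; rewrite //= e.
Qed.

End Aux.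

Theorem mainTheorem3 (X : Type) (A B : set (set X)) :
  filter_base A ->
  (I_has_winning A (negC B) <-> I_has_winning A (negC (Gamma B))).
Proof.
move=> fb; split.
- move=> [sigma [hA hw]].
  have : forall s, exists T, A T /\ forall t, subr t s -> T `<=` sigma t.
    move=> s; have [T AT HT] := fin_cover fb s hA; by exists T.
  case/choice => sigma' hs'.
  exists sigma'; split; first by move=> s; case: (hs' s).
  move=> x fx.
  have key : forall g : nat -> nat, (forall a b, a < b -> g a < g b) ->
      B (range (x \o g)).
    move=> g gi; apply: contrapT; apply: hw => n.
    case: (hs' (prev_moves x (g n))) => _ H; apply: H; last exact: fx.
    by apply: sub_prev => // i; apply: gi.
  move=> nG; apply: nG; split.
    have := key id (fun a b h => h).
    by have -> : range (x \o id) = range x.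
  move=> S' sub inf.
  have [g [gi <-]] := enum_inf sub inf.
  exact: key.
- move=> [sigma [hA hw]]; exists sigma; split => // x fx nB.
  apply: (hw x fx) => -[HB _]; exact: nB.
Qed.
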